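(* Let $\mathcal H$ be the $5$-uniform hypergraph defined below, let $e,f$ be two edges of $\mathcal H$, and let $\phi : V(\mathcal{H}_{ef}) \to V(\mathcal{H})$ be a monomorphism. If $b, e_5 \in \mathcal{H}_{ef}$, then $\phi$ is the identity.
   Context: $\mathcal{H}$ has vertex set $\{z, v_1,\dots,v_9\}$ and edges $r=\{z,v_1,v_3,v_5,v_8\}$, $g=\{z,v_2,v_4,v_7,v_9\}$, $a=\{v_1,v_4,v_6,v_8,v_9\}$, $b=\{v_9,v_1,v_2,v_3,v_4\}$, and $e_i=\{v_i,v_{i+1},v_{i+2},v_{i+3},v_{i+4}\}$ for $i=1,\dots,5$. $\mathcal{H}_{ef}$ is the hypergraph with edge set $E(\mathcal H)\setminus\{e,f\}$, and $V(\mathcal H_{ef})$ is the union of its edges. A monomorphism $\phi: V(\mathcal{H}_{ef})\to V(\mathcal{H})$ is an injective map such that $\{\phi(y): y\in x\}$ is an edge of $\mathcal H$ for every edge $x$ of $\mathcal H_{ef}$; ''identity'' means $\phi(y)=y$ for all $y\in V(\mathcal H_{ef})$. *)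

(* Defs.v *)
From mathcomp Require Import all_boot.
Set Implicit Arguments. Unset Strict Implicit. Unset Printing Implicit Defensive.

Definition V (i : nat) : 'I_10 := inord i.
Definition z : 'I_10 := V 0.

Definition edge_r : {set 'I_10} := [set z; V 1; V 3; V 5; V 8].
Definition edge_g : {set 'I_10} := [set z; V 2; V 4; V 7; V 9].
Definition edge_a : {set 'I_10} := [set V 1; V 4; V 6; V 8; V 9].
Definition edge_b : {set 'I_10} := [set V 9; V 1; V 2; V 3; V 4].
Definition edge_e (i : nat) : {set 'I_10} :=
  [set V i; V i.+1; V i.+2; V i.+3; V i.+4].

Definition H : {set {set 'I_10}} :=
  [set edge_r; edge_g; edge_a; edge_b;
       edge_e 1; edge_e 2; edge_e 3; edge_e 4; edge_e 5].

Definition H_ef (e f : {set 'I_10}) : {set {set 'I_10}} := H :\: [set e; f].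
Definition V_ef (e f : {set 'I_10}) : {set 'I_10} := \bigcup_(x in H_ef e f) x.

(* phi : V(H_ef) -> V(H) is a monomorphism (phi is given as a total map on
   'I_10; only its values on V(H_ef) matter). *)
Definition monomorphism (e f : {set 'I_10}) (phi : 'I_10 -> 'I_10) : Prop :=
  {in V_ef e f &, injective phi} /\
  (forall x, x \in H_ef e f -> phi @: x \in H).

(* Main.v *)
Require Import Defs.
From mathcomp Require Import all_boot.
Set Implicit Arguments. Unset Strict Implicit. Unset Printing Implicit Defensive.

Definition toS (l : seq nat) : {set 'I_10} := [set x : 'I_10 | val x \in l].

Definition lr : seq nat := [:: 0; 1; 3; 5; 8].
Definition lg : seq nat := [:: 0; 2; 4; 7; 9].
Definition la : seq nat := [:: 1; 4; 6; 8; 9].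
Definition lb : seq nat := [:: 9; 1; 2; 3; 4].
Definition lE (i : nat) : seq nat := [:: i; i.+1; i.+2; i.+3; i.+4].
Definition Lall := [:: lr; lg; la; lb; lE 1; lE 2; lE 3; lE 4; lE 5].

Lemma eqV (x : 'I_10) i : i < 10 -> (x == V i) = (val x == i).
Proof. by move=> h; rewrite -(inj_eq val_inj) /= inordK. Qed.

Lemma er : edge_r = toS lr.
Proof. by apply/setP => x; rewrite /edge_r /z !inE !eqV // ?orbA ?orbF. Qed.
Lemma eg : edge_g = toS lg.
Proof. by apply/setP => x; rewrite /edge_g /z !inE !eqV // ?orbA ?orbF. Qed.
Lemma ea : edge_a = toS la.
Proof. by apply/setP => x; rewrite /edge_a !inE !eqV // ?orbA ?orbF. Qed.
Lemma eb : edge_b = toS lb.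
Proof. by apply/setP => x; rewrite /edge_b !inE !eqV // ?orbA ?orbF. Qed.
Lemma eE i : i < 6 -> edge_e i = toS (lE i).
Proof.
move=> hi; apply/setP => x; rewrite /edge_e /lE !inE.
by case: i hi => [|[|[|[|[|[|i]]]]]] // _; rewrite !eqV // ?orbA ?orbF.
Qed.

Lemma Heq : H = [set toS lr; toS lg; toS la; toS lb; toS (lE 1); toS (lE 2);
   toS (lE 3); toS (lE 4); toS (lE 5)].
Proof. by rewrite /H er eg ea eb !eE. Qed.

Lemma memHL s : (s \in H) = (s \in map toS Lall).
Proof. by rewrite Heq !inE /= ?orbA ?orbF. Qed.

Lemma memH s : s \in H -> exists2 l, l \in Lall & s = toS l.
Proof. by rewrite memHL => /mapP. Qed.

Lemma memH' l : l \in Lall -> toS l \in H.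
Proof. by move=> hl; rewrite memHL map_f. Qed.

Definition ordl := iota 0 10.

Definition distinct_check :=
  all (fun l1 : seq nat => all (fun l2 : seq nat => (l1 == l2) ||
     has (fun y : nat => (y \in l1) != (y \in l2)) ordl) Lall) Lall.

Lemma distinct_ok : distinct_check. Proof. by vm_compute. Qed.

Lemma small_ok : all (all (fun u => u < 10)) Lall. Proof. by vm_compute. Qed.

Lemma small l u : l \in Lall -> u \in l -> u < 10.
Proof. by move=> hl hu; exact: (allP (allP small_ok l hl) u hu). Qed.

Lemma toS_inj l1 l2 : l1 \in Lall -> l2 \in Lall -> toS l1 = toS l2 -> l1 = l2.
Proof.
move=> h1 h2 E.
have := distinct_ok; move/allP/(_ _ h1)/allP/(_ _ h2)/orP => [/eqP //|].
case/hasP => y; rewrite mem_iota /= => hy.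
have : (@inord 9 y \in toS l1) = (@inord 9 y \in toS l2) by rewrite E.
by rewrite /toS !inE /= (@inordK 9 y) // => ->; rewrite eqxx.
Qed.

Definition upd (g : nat -> nat) v a := fun u => if u == v then a else g u.

Definition stT := seq (seq nat * seq (seq nat)).

Definition step (st : stT) v a : stT :=
  map (fun p => if v \in p.1 then (p.1, filter (fun h => a \in h) p.2) else p) st.

Fixpoint search (st : stT) (done : seq nat) (g : nat -> nat)
  (todo : seq nat) : bool :=
  match todo with
  | [::] => all (fun v => g v == v) done
  | v :: t => all (fun a => if a \in map g done then true else
                 let st' := step st v a in
                 if all (fun p => p.2 != [::]) st' then
                 search st' (v :: done) (upd g v a) t else true) ordl
  end.

Definition inv (phi : nat -> nat) (st : stT) :=
  forall p, p \in st -> exists2 h, h \in p.2 & all (fun u => phi u \in h) p.1.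

Lemma inv_step phi st v : inv phi st -> inv phi (step st v (phi v)).
Proof.
move=> I p /mapP [q hq ->]; have [h hh hall] := I q hq.
case: ifP => vq //=; exists h => //; rewrite mem_filter hh andbT.
exact: (allP hall).
Qed.

Lemma inv_ne phi st : inv phi st -> all (fun p => p.2 != [::]) st.
Proof.
move=> I; apply/allP => p hp; have [h hh _] := I p hp.
by apply/eqP => E; rewrite E in hh.
Qed.

Lemma search_sound (W : seq nat) (phi : nat -> nat) :
  {in W &, injective phi} -> {in W, forall u, phi u < 10} ->
  forall todo st done g, inv phi st -> uniq (done ++ todo) -> {subset done ++ todo <= W} ->
  {in done, forall u, g u = phi u} ->
  search st done g todo -> forall u, u \in done ++ todo -> phi u = u.
Proof.
move=> inj rng; elim=> [|v t IH] st done g I U S A.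
  move/allP=> hall u; rewrite cats0 => ud.
  by rewrite -A //; apply/eqP/hall.
have vW : v \in W by apply: S; rewrite mem_cat inE eqxx orbT.
move/allP/(_ (phi v)) => hs.
have hsearch : search (step st v (phi v)) (v :: done) (upd g v (phi v)) t.
  have hs' := hs (_ : phi v \in ordl).
  move: hs'; rewrite mem_iota /= rng // => /(_ isT) hs'.
  have notin : phi v \notin map g done.
    apply/negP=> /mapP [u ud]; rewrite A // => E.
    have vu : v = u.
      apply: inj; [exact: vW | apply: S; by rewrite mem_cat ud | exact: E].
    move: U; rewrite cat_uniq => /and3P [_ /hasP H2 _].
    by case: H2; exists v; rewrite ?inE ?eqxx // vu.
  by move: hs'; rewrite (negbTE notin) /= (inv_ne (inv_step (v:=v) I)).
have memeq : (v :: done) ++ t =i done ++ v :: t.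
  by move=> x; rewrite /= !mem_cat !inE mem_cat; case: (x == v); case: (x \in done); case: (x \in t).
move=> u hu; apply: (IH (step st v (phi v)) (v :: done) (upd g v (phi v))) => //.
- exact: inv_step.
- by rewrite (perm_uniq (s2 := done ++ v :: t)) //; apply/permP => p;
     rewrite /= !count_cat /= addnCA.
- by move=> x; rewrite memeq; apply: S.
- move=> x; rewrite inE /upd; case: eqP => [->|_ /= xd]; first by [].
  exact: A.
- by rewrite memeq.
Qed.

Definition Hefl le lf := filter (fun l => (l != le) && (l != lf)) Lall.
Definition Vl le lf := undup (flatten (Hefl le lf)).
Definition st0 le lf : stT := map (fun x => (x, Lall)) (Hefl le lf).

Definition check1 le lf :=
    [&& lb != le, lb != lf, lE 5 != le & lE 5 != lf] ==>
    search (st0 le lf) [::] id (Vl le lf).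

Definition checkall := all (fun le => all (fun lf => check1 le lf) Lall) Lall.

Lemma checkall_ok : checkall. Proof. by vm_compute. Qed.

Theorem lemma4p10 (e f : {set 'I_10}) (phi : 'I_10 -> 'I_10) :
  e \in H -> f \in H -> e != f ->
  monomorphism e f phi ->
  edge_b \in H_ef e f -> edge_e 5 \in H_ef e f ->
  forall y, y \in V_ef e f -> phi y = y.
Proof.
move=> /memH [le hle ->] /memH [lf hlf ->] _ [inj himg] hb h5.
have notin l : l \in Lall -> toS l \in H_ef (toS le) (toS lf) -> (l != le) && (l != lf).
  move=> hl; rewrite /H_ef !inE => /andP [/norP [n1 n2] _].
  by apply/andP; split; apply/negP => /eqP E; subst l; rewrite eqxx in n1 n2.
have inHef l : l \in Hefl le lf -> toS l \in H_ef (toS le) (toS lf).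
  rewrite mem_filter => /andP [/andP [n1 n2] hl].
  rewrite /H_ef in_setD memH' // andbT !inE; apply/norP; split; apply/negP => /eqP E.
    by move: n1; rewrite (toS_inj hl hle E) eqxx.
  by move: n2; rewrite (toS_inj hl hlf E) eqxx.
have HL l : l \in Hefl le lf -> l \in Lall by rewrite mem_filter => /andP [].
have Vsmall u : u \in Vl le lf -> u < 10.
  by rewrite mem_undup => /flattenP [l hl ul]; apply: (small (HL _ hl)).
have VlV u : u \in Vl le lf -> @inord 9 u \in V_ef (toS le) (toS lf).
  move=> hu; have u10 := Vsmall u hu.
  move: hu; rewrite mem_undup => /flattenP [l hl ul].
  by apply/bigcupP; exists (toS l); [apply: inHef | rewrite inE /= inordK].
have hc := checkall_ok; move/allP/(_ _ hle)/allP/(_ _ hlf): hc => hc.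
have hs : search (st0 le lf) [::] id (Vl le lf).
  apply: (implyP hc).
  have hbL : lb \in Lall by rewrite !inE eqxx !orbT.
  move: (notin _ hbL).
  rewrite -eb => /(_ hb) /andP [-> ->].
  have h5L : lE 5 \in Lall by rewrite !inE eqxx !orbT.
  by move: (notin _ h5L); rewrite -(eE (isT : 5 < 6)) => /(_ h5) /andP [-> ->].
pose phi' := fun n => val (phi (@inord 9 n)).
have key : forall u, u \in Vl le lf -> phi' u = u.
  apply: (@search_sound (Vl le lf) phi' _ _ (Vl le lf) (st0 le lf) [::] id) => //.
  - move=> a b ha hb' E; have := inj _ _ (VlV _ ha) (VlV _ hb') (val_inj E).
    by move/(congr1 val); rewrite /= !inordK //; apply: Vsmall.
  - by move=> u _; apply: ltn_ord.
  - move=> p /mapP [l' hl' ->] /=.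
    have [h hh E] := memH (himg _ (inHef _ hl')).
    exists h => //; apply/allP => v vl.
    have v10 : v < 10 by apply: (small (HL _ hl')).
    have : phi (@inord 9 v) \in phi @: toS l' by apply: imset_f; rewrite inE /= inordK.
    by rewrite E inE.
  - exact: undup_uniq.
move=> y /bigcupP [x hx yx].
have [l hl xl] := memH (setDP hx).1 ; subst x.
have yV : val y \in Vl le lf.
  rewrite mem_undup; apply/flattenP; exists l; last by move: yx; rewrite inE.
  by rewrite mem_filter notin.
by apply: val_inj; rewrite -[RHS](key _ yV) /phi' inord_val.
Qed.
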